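(* Let $\psi:(0,1]\to(0,\infty)$ with $\psi(1)=1$, $\lim_{r\to0+}\psi(r)=0$ and $I_\psi\subset(1,2)$, and let $f\in C^\psi(\mathbb{R}^d)$. Then there exists a constant $C=C(\psi)$ such that for every $i=1,\dots,d$, $$[D_if]_{C^{-1;\psi}}\le C\big(\|f\|_{C^0}+[[f]]_{C^\psi}\big).$$
   Context: $g:(0,1]\to(0,\infty)$ is almost increasing if $c\,g(r)\le g(R)$ for some $c\in(0,1]$ and all $0<r\le R\le1$, almost decreasing if $g(R)\le Cg(r)$ for some $C\ge1$ and all $0<r\le R\le1$. $M_\psi=\inf\{\alpha: \psi(r)/r^\alpha\text{ almost decreasing}\}$, $m_\psi=\sup\{\alpha: \psi(r)/r^\alpha\text{ almost increasing}\}$, $I_\psi=[m_\psi,M_\psi]$. $\|f\|_{C^0}=\sup|f|$; $D_if$ is the $i$-th partial derivative. $[g]_{C^{-1;\psi}}=\sup_x\sup_{0<|h|\le1}\frac{|g(x+h)-g(x)|}{\psi(|h|)|h|^{-1}}$; $[[f]]_{C^\psi}=\sup_x\sup_{0<|h|\le1}\frac{|f(x+h)-2f(x)+f(x-h)|}{\psi(|h|)}$. When $m_\psi\in(1,2]$, $C^\psi(\mathbb{R}^d)$ is the set of continuous $f$ with $f$ and all first partials bounded continuous and $[D_if]_{C^{-1;\psi}}<\infty$ for all $i$. *)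

(* Defs.v *)
From HB Require Import structures.
From mathcomp Require Import all_boot all_order all_algebra.
From mathcomp Require Import all_classical all_reals all_analysis.
Set Implicit Arguments. Unset Strict Implicit. Unset Printing Implicit Defensive.
Import Order.TTheory GRing.Theory Num.Theory.
Import numFieldNormedType.Exports.
Local Open Scope classical_set_scope.
Local Open Scope ring_scope.

Section Defs.
Variable R : realType.

Definition enorm (d : nat) (h : 'rV[R]_d) : R :=
  Num.sqrt (\sum_(j < d) h 0 j ^+ 2).

Definition evec (d : nat) (i : 'I_d) : 'rV[R]_d := delta_mx 0 i.

Definition partial (d : nat) (i : 'I_d) (f : 'rV[R]_d -> R) : 'rV[R]_d -> R :=
  fun x => derive f x (evec i).

Definition almost_increasing (g : R -> R) : Prop :=
  exists c : R, 0 < c <= 1 /\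
    forall r s : R, 0 < r -> r <= s -> s <= 1 -> c * g r <= g s.

Definition almost_decreasing (g : R -> R) : Prop :=
  exists C : R, 1 <= C /\
    forall r s : R, 0 < r -> r <= s -> s <= 1 -> g s <= C * g r.

(* M_psi = inf {a | psi(r)/r^a almost decreasing}, m_psi = sup {a | ... almost increasing},
   as extended reals (inf of empty set = +oo, sup of empty set = -oo). *)
Definition M_index (psi : R -> R) : \bar R :=
  ereal_inf [set (a%:E)%E | a in [set a : R | almost_decreasing (fun r => psi r / r `^ a)]].

Definition m_index (psi : R -> R) : \bar R :=
  ereal_sup [set (a%:E)%E | a in [set a : R | almost_increasing (fun r => psi r / r `^ a)]].

Definition I_index (psi : R -> R) : set R :=
  [set a : R | (m_index psi <= a%:E)%E /\ (a%:E <= M_index psi)%E].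

Definition sup_norm (d : nat) (f : 'rV[R]_d -> R) : \bar R :=
  ereal_sup [set (`|f x|%:E)%E | x in [set: 'rV[R]_d]].

Definition holder_m1 (psi : R -> R) (d : nat) (g : 'rV[R]_d -> R) : \bar R :=
  ereal_sup [set z : \bar R | exists x h : 'rV[R]_d,
     0 < enorm h <= 1 /\
     z = (`|g (x + h) - g x| / (psi (enorm h) / enorm h))%:E].

Definition holder2 (psi : R -> R) (d : nat) (f : 'rV[R]_d -> R) : \bar R :=
  ereal_sup [set z : \bar R | exists x h : 'rV[R]_d,
     0 < enorm h <= 1 /\
     z = (`|f (x + h) - 2 * f x + f (x - h)| / psi (enorm h))%:E].

(* C^psi(R^d) for m_psi in (1,2]: f continuous, f and all first partials
   bounded continuous, and [D_i f]_{C^{-1;psi}} < oo for all i. *)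
Definition in_Cpsi (psi : R -> R) (d : nat) (f : 'rV[R]_d -> R) : Prop :=
  continuous f /\ (exists M : R, forall x, `|f x| <= M) /\
  forall i : 'I_d,
    (forall x, derivable f x (evec i)) /\
    continuous (partial i f) /\
    (exists M : R, forall x, `|partial i f x| <= M) /\
    (holder_m1 psi (partial i f) < +oo)%E.

End Defs.

(* Main.v *)
Require Import Defs.
From mathcomp Require Import all_boot all_order all_algebra.
From mathcomp Require Import all_classical all_reals all_analysis.
From mathcomp Require Import ring lra.
Import Order.TTheory GRing.Theory Num.Theory.
Import numFieldNormedType.Exports.
Local Open Scope classical_set_scope.
Local Open Scope ring_scope.
Set Implicit Arguments. Unset Strict Implicit.
Lemma eq_le_' (R : realType) (x y : R) : x = y -> x <= y.
Proof. by move->. Qed.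

Lemma eps_delta (R : realType) (D : R -> R) (L : R) :
  D h @[h --> 0^'] --> L ->
  forall e, 0 < e -> exists2 del : R, 0 < del & forall h, 0 < `|h| < del -> `|L - D h| < e.
Proof.
move=> /cvgrPdist_lt H e e0; have := H e e0.
rewrite /prop_near1 /nbhs /= /within /= => /nbhs_ballP [del del0 Hb].
exists del => // h /andP[h0 hd]; apply: Hb; last by rewrite -normr_gt0.
by rewrite /ball /= sub0r normrN.
Qed.

Lemma small_pow (R : realType) (del : R) : 0 < del -> exists n : nat, 2^-1 ^+ n < del.
Proof.
move=> d0.
set N := Num.Def.archi_bound (del^-1).
have h1 : del^-1 < N%:R by apply: archi_boundP; rewrite invr_ge0 ltW.
have h2 : (N%:R : R) <= (2 ^ N)%:R by rewrite ler_nat ltnW // ltn_expl.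
exists N; rewrite exprVn -natrX.
have hp : (0 : R) < (2 ^ N)%:R by rewrite ltr0n expn_gt0.
rewrite -(invrK del) ltf_pV2 ?posrE ?invr_gt0 //.
exact: lt_le_trans h1 h2.
Qed.
Lemma core1 (R : realType) (psi phi : R -> R) (L H c rho : R) :
  0 < c -> 0 <= H -> 0 <= rho -> rho < 1 ->
  (forall r, 0 < r <= 1 -> 0 < psi r) ->
  (forall t m, 0 < t -> t <= 1 ->
     psi (t * 2^-1 ^+ m) / (t * 2^-1 ^+ m) <= psi t * rho ^+ m / (c * t)) ->
  (forall s u, 0 < u -> u <= 1 -> `|phi (s + u) - 2 * phi s + phi (s - u)| <= H * psi u) ->
  (fun h => h^-1 * (phi h - phi 0)) @ 0^' --> L ->
  forall t, 0 < t -> t <= 1 ->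
  `|L - (phi t - phi (- t)) / (2 * t)| <= H * psi t * rho / (2 * c * t * (1 - rho)).
Proof.
move=> c0 H0 r0 r1 ppos Hsc HD HL t t0 t1.
set Q := fun s => (phi s - phi (-s)) / (2 * s).
set B := H * psi t * rho / (2 * c * t * (1 - rho)).
have pt : 0 < psi t by apply: ppos; rewrite t0 t1.
have B0 : 0 <= B.
  have r1' : 0 < 1 - rho by lra.
  rewrite /B; apply: divr_ge0; first by rewrite !mulr_ge0 // ltW.
  by rewrite !mulr_ge0 // ltW.
have step : forall s, 0 < s -> s <= 1 -> `|Q s - Q (2 * s)| <= H * psi s / (2 * s).
  move=> s s0 s1.
  have h1 := HD s s s0 s1; have h2 := HD (- s) s s0 s1.
  have E : Q s - Q (2 * s) = ((phi (- s + s) - 2 * phi (- s) + phi (- s - s))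
        - (phi (s + s) - 2 * phi s + phi (s - s))) / (4 * s).
    have -> : - s + s = s - s by lra.
    have -> : - s - s = - (2 * s) by lra.
    have -> : s + s = 2 * s by lra.
    rewrite /Q; field; lra.
  rewrite E normrM normfV (gtr0_norm (_ : 0 < 4 * s)); last by lra.
  rewrite ler_pdivrMr; last by lra.
  have -> : H * psi s / (2 * s) * (4 * s) = H * psi s + H * psi s by field; lra.
  exact: le_trans (ler_normB _ _) (lerD h2 h1).
have ind : forall n, `|Q (t * 2^-1 ^+ n) - Q t| <= B * (1 - rho ^+ n).
  elim=> [|n IH]; first by rewrite expr0 mulr1 subrr normr0 subrr mulr0.
  set s := t * 2^-1 ^+ n.+1.
  have s0 : 0 < s by rewrite /s mulr_gt0 // exprn_gt0 // invr_gt0.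
  have s1 : s <= 1.
    apply: le_trans t1; rewrite /s ger_pMr // exprn_ile1 // ?invr_ge0 //.
    by rewrite invf_le1 //; lra.
  have e2 : 2 * s = t * 2^-1 ^+ n by rewrite /s exprS; field.
  have hs := Hsc t n.+1 t0 t1.
  have -> : Q s - Q t = (Q s - Q (2 * s)) + (Q (2 * s) - Q t) by ring.
  apply: le_trans (ler_normD _ _) _.
  have IH' : `|Q (2 * s) - Q t| <= B * (1 - rho ^+ n) by rewrite e2.
  apply: le_trans (lerD (step s s0 s1) IH') _.
  have -> : B * (1 - rho ^+ n.+1) = H / 2 * (psi t * rho ^+ n.+1 / (c * t)) + B * (1 - rho ^+ n).
    rewrite /B exprS; field; apply/andP; split; [|apply/andP; split]; lra.
  apply: lerD => //.
  have -> : H * psi s / (2 * s) = H / 2 * (psi s / s) by field; lra.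
  by apply: ler_wpM2l => //; rewrite divr_ge0.
apply/ler_addgt0Pr => e e0.
have [del del0 Hdel] := @eps_delta _ _ _ HL e e0.
have [n Hn] := @small_pow _ _ del0.
set h := t * 2^-1 ^+ n.
have h0 : 0 < h by rewrite /h mulr_gt0 // exprn_gt0 // invr_gt0.
have hd : h < del.
  apply: le_lt_trans Hn; rewrite /h ger_pMl // exprn_gt0 // invr_gt0 //.
have a1 := Hdel h; have a2 := Hdel (- h).
rewrite normrN gtr0_norm // h0 hd /= in a1 a2.
have a1' := a1 isT; have a2' := a2 isT.
have -> : L - Q t = (L - Q h) + (Q h - Q t) by ring.
apply: le_trans (ler_normD _ _) _.
rewrite addrC; apply: lerD.
  apply: le_trans (ind n) _.
  by apply: ler_piMr => //; rewrite gerBl exprn_ge0.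
have -> : L - Q h = ((L - h^-1 * (phi h - phi 0)) + (L - (- h)^-1 * (phi (- h) - phi 0))) / 2.
  rewrite /Q; field; lra.
rewrite normrM (gtr0_norm (_ : (0:R) < 2^-1)) ?invr_gt0 //.
apply: ltW; rewrite -ltr_pdivlMr ?invr_gt0 //.
apply: le_lt_trans (ler_normD _ _) _.
have -> : e / 2^-1 = e + e by field.
exact: ltrD.
Qed.
Lemma psi_scale (R : realType) (psi : R -> R) (a c : R) : 1 < a -> 0 < c ->
  (forall r s, 0 < r -> r <= s -> s <= 1 -> c * (psi r / r `^ a) <= psi s / s `^ a) ->
  forall t m, 0 < t -> t <= 1 ->
  psi (t * 2^-1 ^+ m) / (t * 2^-1 ^+ m) <= psi t * ((2^-1) `^ (a - 1)) ^+ m / (c * t).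
Proof.
move=> a1 c0 HAI t m t0 t1.
set q : R := 2^-1 ^+ m.
set P : R := ((2^-1) `^ (a - 1)) ^+ m.
have q0 : 0 < q by rewrite /q exprn_gt0 // invr_gt0.
have q1 : q <= 1 by rewrite /q exprn_ile1 // ?invr_ge0 // invf_le1 //; lra.
have P0 : 0 < P by rewrite /P exprn_gt0 // powR_gt0 // invr_gt0.
set s := t * q.
have s0 : 0 < s by rewrite mulr_gt0.
have st : s <= t by rewrite /s ger_pMr.
have T0 : 0 < t `^ a by rewrite powR_gt0.
have H := HAI s t s0 st t1.
have Es : s `^ a = t `^ a * (q * P).
  rewrite /s powRM ?ltW //; congr (_ * _).
  rewrite -mulr_powRB1 ?ltW //; last by lra.
  congr (_ * _); rewrite /q /P -powR_mulrn ?invr_ge0 // powRAC powR_mulrn //.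
rewrite Es in H.
have X0 : 0 < t `^ a * (q * P) by rewrite !mulr_gt0.
have H' : psi s <= psi t * q * P / c.
  have -> : psi s = c * (psi s / (t `^ a * (q * P))) * ((t `^ a * (q * P)) / c).
    by field; apply/andP; split; lra.
  apply: le_trans (ler_wpM2r _ H) _; first by rewrite divr_ge0 // ltW.
  by apply: eq_le_'; field; rewrite !gt_eqF.
apply: le_trans (ler_wpM2r _ H') _; first by rewrite invr_ge0 ltW.
by apply: eq_le_'; rewrite /s; field; rewrite !gt_eqF.
Qed.

Lemma psi_mono (R : realType) (psi : R -> R) (a c : R) : 0 < a -> 0 < c ->
  (forall r, 0 < r <= 1 -> 0 < psi r) ->
  (forall r s, 0 < r -> r <= s -> s <= 1 -> c * (psi r / r `^ a) <= psi s / s `^ a) ->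
  forall r s, 0 < r -> r <= s -> s <= 1 -> psi r <= psi s / c.
Proof.
move=> a0 c0 pp HAI r s r0 rs s1.
have s0 : 0 < s by exact: (lt_le_trans r0 rs).
have ps : 0 < psi s by apply: pp; rewrite s0 s1.
have R0 : 0 < r `^ a by rewrite powR_gt0.
have S0 : 0 < s `^ a by rewrite powR_gt0.
have rsa : r `^ a <= s `^ a.
  by apply: (ge0_ler_powR (ltW a0)) => //; rewrite nnegrE ltW.
have -> : psi r = c * (psi r / r `^ a) * (r `^ a / c) by field; rewrite !gt_eqF.
apply: le_trans (ler_wpM2r _ (HAI r s r0 rs s1)) _; first by rewrite divr_ge0 ?ltW.
have -> : psi s / s `^ a * (r `^ a / c) = (psi s / c) * (r `^ a / s `^ a) by field; rewrite !gt_eqF.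
apply: ler_piMr; first by rewrite divr_ge0 ?ltW.
by rewrite ler_pdivrMr // mul1r.
Qed.

Lemma rho_lt1 (R : realType) (a : R) : 1 < a -> (2^-1 : R) `^ (a - 1) < 1.
Proof.
move=> a1; rewrite /powR (_ : (2^-1 : R) == 0 = false); last by apply/negbTE; rewrite invr_eq0 pnatr_eq0.
rewrite expR_lt1 pmulr_rlt0; last by lra.
apply: ln_lt0; rewrite invr_gt0 /= invf_lt1 //; lra.
Qed.
Lemma enorm_ge0 (R : realType) d (v : 'rV[R]_d) : 0 <= enorm v.
Proof. exact: sqrtr_ge0. Qed.

Lemma enorm_sq (R : realType) d (v : 'rV[R]_d) : enorm v ^+ 2 = \sum_(j < d) v 0 j ^+ 2.
Proof. by rewrite /enorm sqr_sqrtr // sumr_ge0 // => j _; rewrite sqr_ge0. Qed.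

Lemma evecE (R : realType) d (i j : 'I_d) : (evec R i) 0 j = (j == i)%:R.
Proof. by rewrite /evec mxE eqxx. Qed.

Lemma enorm_addscale (R : realType) d (v : 'rV[R]_d) (b : R) (i : 'I_d) :
  enorm (v + b *: evec R i) ^+ 2 = enorm v ^+ 2 + 2 * b * v 0 i + b ^+ 2.
Proof.
rewrite !enorm_sq (bigD1 i) //= [in RHS](bigD1 i) //=.
rewrite !mxE !eqxx /= mulr1.
rewrite (eq_bigr (fun j => v 0 j ^+ 2)); last first.
  by move=> j /negbTE ji; rewrite !mxE ji andbF mulr0 addr0.
ring.
Qed.

Lemma enorm_scale (R : realType) d (v : 'rV[R]_d) (c : R) :
  enorm (c *: v) = `|c| * enorm v.
Proof.
rewrite /enorm (eq_bigr (fun j => c ^+ 2 * v 0 j ^+ 2)); last first.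
  by move=> j _; rewrite mxE exprMn.
by rewrite -mulr_sumr sqrtrM ?sqr_ge0 // sqrtr_sqr.
Qed.

Lemma enorm_evec (R : realType) d (i : 'I_d) (u : R) : enorm (u *: evec R i) = `|u|.
Proof.
rewrite enorm_scale /enorm (bigD1 i) //= big1; last first.
  by move=> j /negbTE ji; rewrite evecE ji expr0n.
by rewrite evecE eqxx expr1n addr0 sqrtr1 mulr1.
Qed.

Lemma entry_le (R : realType) d (v : 'rV[R]_d) (i : 'I_d) : `|v 0 i| <= enorm v.
Proof.
rewrite -sqrtr_sqr /enorm ler_sqrt; last by rewrite sumr_ge0 // => j _; rewrite sqr_ge0.
rewrite (bigD1 i) //= lerDl sumr_ge0 // => j _; exact: sqr_ge0.
Qed.

Lemma enorm_eq0 (R : realType) d (v : 'rV[R]_d) : enorm v = 0 -> v = 0.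
Proof.
move=> /eqP; rewrite /enorm sqrtr_eq0 => H.
have S0 : \sum_(j < d) v 0 j ^+ 2 = 0.
  by apply/eqP; rewrite eq_le H sumr_ge0 // => j _; rewrite sqr_ge0.
apply/rowP => j; rewrite mxE.
have := @psumr_eq0P _ _ _ _ (fun j _ => sqr_ge0 (v 0 j)) S0 j isT.
by move/eqP; rewrite sqrf_eq0 => /eqP.
Qed.

Lemma holder2_pt (R : realType) d (psi : R -> R) (f : 'rV[R]_d -> R) (H : R) :
  (forall r : R, 0 < r <= 1 -> 0 < psi r) ->
  holder2 psi f = H%:E ->
  forall y w : 'rV[R]_d, 0 < enorm w <= 1 ->
  `|f (y + w) - 2 * f y + f (y - w)| <= H * psi (enorm w).
Proof.
move=> pp Hh y w hw.
have := @ereal_sup_ubound R [set z : \bar R | exists x h : 'rV[R]_d,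
     0 < enorm h <= 1 /\
     z = (`|f (x + h) - 2 * f x + f (x - h)| / psi (enorm h))%:E] _ (ex_intro _ y (ex_intro _ w (conj hw erefl))).
rewrite -/(holder2 psi f) Hh lee_fin ler_pdivrMr //; exact: pp.
Qed.

Lemma derivable_cvg' (R : realType) d (f : 'rV[R]_d -> R) (x e : 'rV[R]_d) :
  derivable f x e ->
  (fun h : R => h^-1 * (f (h *: e + x) - f (0 *: e + x))) @ 0^' --> derive f x e.
Proof.
move=> H; rewrite scale0r add0r; exact: H.
Qed.
Lemma Q_bound (R : realType) d (psi : R -> R) (a c H : R) (f : 'rV[R]_d -> R) (i : 'I_d) :
  1 < a -> 0 < c -> 0 <= H ->
  (forall r, 0 < r <= 1 -> 0 < psi r) ->
  (forall r s, 0 < r -> r <= s -> s <= 1 -> c * (psi r / r `^ a) <= psi s / s `^ a) ->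
  (forall x, derivable f x (evec R i)) ->
  holder2 psi f = H%:E ->
  forall (y : 'rV[R]_d) (t : R), 0 < t -> t <= 1 ->
  `|partial i f y - (f (t *: evec R i + y) - f ((- t) *: evec R i + y)) / (2 * t)|
    <= H * psi t * ((2^-1) `^ (a - 1)) / (2 * c * t * (1 - (2^-1) `^ (a - 1))).
Proof.
move=> a1 c0 H0 pp HAI Hder Hh y t t0 t1.
set e := evec R i.
have rho0 : 0 <= (2^-1 : R) `^ (a - 1) by exact: powR_ge0.
have rho1 := rho_lt1 a1.
apply: (@core1 R psi (fun s => f (s *: e + y)) _ H c _ c0 H0 rho0 rho1 pp) => //.
- move=> t' m t0' t1'; exact: psi_scale.
- move=> s u u0 u1.
  have Hw : 0 < enorm (u *: e) <= 1 by rewrite enorm_evec gtr0_norm // u0 u1.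
  rewrite /= scalerDl scalerBl [s *: e + u *: e + y]addrAC [s *: e - u *: e + y]addrAC.
  have := holder2_pt pp Hh (s *: e + y) Hw.
  by rewrite enorm_evec (gtr0_norm u0).
- exact: (derivable_cvg' (Hder y)).
Qed.
Lemma main_real (R : realType) d (psi : R -> R) (a c H : R) (f : 'rV[R]_d -> R) (i : 'I_d) :
  1 < a -> 0 < c ->
  (forall r, 0 < r <= 1 -> 0 < psi r) ->
  (forall r s, 0 < r -> r <= s -> s <= 1 -> c * (psi r / r `^ a) <= psi s / s `^ a) ->
  (forall x, derivable f x (evec R i)) ->
  holder2 psi f = H%:E ->
  forall x h : 'rV[R]_d, 0 < enorm h <= 1 ->
  `|partial i f (x + h) - partial i f x| <=
   (((2^-1) `^ (a - 1)) ^+ 2 / (c ^+ 2 * (1 - (2^-1) `^ (a - 1))) + 2 / c) * H * (psi (enorm h) / enorm h).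
Proof.
move=> a1 c0 pp HAI Hder Hh x h /andP[N0 N1].
have e1 : enorm (evec R i) = 1 by rewrite -[evec R i]scale1r enorm_evec normr1.
have p1 : 0 < psi 1 by apply: pp; rewrite ltr01 lexx.
have H0 : 0 <= H.
  have : 0 < enorm (evec R i) <= 1 by rewrite e1 ltr01 lexx.
  move/(holder2_pt pp Hh 0); rewrite e1 => /(le_trans (normr_ge0 _)).
  by rewrite pmulr_lge0.
set e := evec R i.
set N := enorm h.
set rho := (2^-1 : R) `^ (a - 1).
have rho0 : 0 <= rho by exact: powR_ge0.
have rho1 : rho < 1 by exact: rho_lt1.
set t := N / 2.
have tE : t = N / 2 by [].
have t0 : 0 < t by rewrite tE divr_gt0.
have t1 : t <= 1 by rewrite tE ler_pdivrMr // mul1r (le_trans N1) // ler1n.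
have pN : 0 < psi N by apply: pp; rewrite N0 N1.
have Ht : psi t / t <= psi N * rho / (c * N).
  by have := psi_scale a1 c0 HAI 1 N0 N1; rewrite expr1.
have Q1 := Q_bound a1 c0 H0 pp HAI Hder Hh (x + h) t0 t1.
have Q0 := Q_bound a1 c0 H0 pp HAI Hder Hh x t0 t1.
rewrite -/e -/rho in Q1 Q0.
set B := H * psi t * rho / (2 * c * t * (1 - rho)) in Q1 Q0.
have HB : B <= H * rho ^+ 2 / (2 * c ^+ 2 * (1 - rho)) * (psi N / N).
  have -> : B = H * rho / (2 * c * (1 - rho)) * (psi t / t).
    by rewrite /B; field; rewrite !gt_eqF // ?subr_gt0 //.
  apply: le_trans (ler_wpM2l _ Ht) _.
    by rewrite divr_ge0 ?mulr_ge0 // ?subr_ge0 ?ltW // ?mulr_ge0 // ?ltW.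
  by apply: eq_le_'; field; rewrite !gt_eqF // ?subr_gt0 //.
set p := x + 2^-1 *: h.
set w1 := 2^-1 *: h + t *: e.
set w2 := (- 2^-1) *: h + t *: e.
have Dbound : forall w, enorm w <= N ->
    `|f (p + w) - 2 * f p + f (p - w)| <= H * (psi N / c).
  move=> w wN; case: (eqVneq (enorm w) 0) => [/enorm_eq0 -> | wn0].
    rewrite addr0 subr0 (_ : f p - 2 * f p + f p = 0); last by ring.
    by rewrite normr0 mulr_ge0 // divr_ge0 // ltW.
  have w0 : 0 < enorm w by rewrite lt_neqAle eq_sym wn0 enorm_ge0.
  have w1' : 0 < enorm w <= 1 by rewrite w0 (le_trans wN N1).
  apply: le_trans (holder2_pt pp Hh p w1') _.
  apply: (ler_wpM2l H0); apply: (psi_mono _ c0 pp HAI) => //; lra.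
have /andP[hi1 hi2] : - N <= h 0 i <= N by rewrite -ler_norml; exact: entry_le.
have w1N : enorm w1 <= N.
  have E := enorm_addscale (2^-1 *: h) t i.
  rewrite enorm_scale mxE -/N -/e -/w1 in E.
  rewrite (gtr0_norm (_ : (0:R) < 2^-1)) in E; last by rewrite invr_gt0.
  have := enorm_ge0 w1; nra.
have w2N : enorm w2 <= N.
  have E := enorm_addscale ((- 2^-1) *: h) t i.
  rewrite enorm_scale mxE -/N -/e -/w2 normrN in E.
  rewrite (gtr0_norm (_ : (0:R) < 2^-1)) in E; last by rewrite invr_gt0.
  have := enorm_ge0 w2; nra.
have v1 : p + w1 = t *: e + (x + h) by apply/rowP => j; rewrite /p /w1 !mxE; field.
have v2 : p - w1 = (- t) *: e + x by apply/rowP => j; rewrite /p /w1 !mxE; field.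
have v3 : p + w2 = t *: e + x by apply/rowP => j; rewrite /p /w2 !mxE; field.
have v4 : p - w2 = (- t) *: e + (x + h) by apply/rowP => j; rewrite /p /w2 !mxE; field.
set Q1v := (f (t *: e + (x + h)) - f ((- t) *: e + (x + h))) / (2 * t) in Q1.
set Q0v := (f (t *: e + x) - f ((- t) *: e + x)) / (2 * t) in Q0.
have EQm : Q1v - Q0v = ((f (p + w1) - 2 * f p + f (p - w1)) - (f (p + w2) - 2 * f p + f (p - w2))) / N.
  by rewrite v1 v2 v3 v4 /Q1v /Q0v tE; field; rewrite gt_eqF.
have M : `|Q1v - Q0v| <= 2 * (H * (psi N / c)) / N.
  rewrite EQm normrM (gtr0_norm (_ : 0 < N^-1)) ?invr_gt0 //.
  apply: ler_wpM2r; first by rewrite invr_ge0 ltW.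
  apply: le_trans (ler_normB _ _) _.
  apply: le_trans (lerD (Dbound w1 w1N) (Dbound w2 w2N)) _.
  by apply: eq_le_'; ring.
have -> : partial i f (x + h) - partial i f x =
   (partial i f (x + h) - Q1v) - (partial i f x - Q0v) + (Q1v - Q0v) by ring.
apply: le_trans (ler_normD _ _) _.
apply: le_trans (lerD (ler_normB _ _) M) _.
apply: le_trans (lerD (lerD (le_trans Q1 HB) (le_trans Q0 HB)) (lexx _)) _.
apply: eq_le_'; field.
by rewrite !gt_eqF // subr_gt0.
Qed.
Lemma growth (R : realType) (psi : R -> R) (a b : R) :
  (forall r, 0 < r <= 1 -> 0 < psi r) -> psi 1 = 1 ->
  almost_increasing (fun r => psi r / r `^ a) ->
  almost_decreasing (fun r => psi r / r `^ b) -> a <= b.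
Proof.
move=> pp p1 [c [/andP[c0 c1] Hc]] [C [C1 HC]].
rewrite leNgt; apply/negP => ba.
set del := a - b.
have d0 : 0 < del by rewrite /del subr_gt0.
have C0 : 0 < C by exact: (lt_le_trans ltr01 C1).
have key : forall r, 0 < r -> r <= 1 -> 1 <= C / c * r `^ del.
  move=> r r0 r1.
  have h1 := Hc r 1 r0 r1 (lexx _); have h2 := HC r 1 r0 r1 (lexx _).
  rewrite /= p1 powR1 divr1 in h1 h2.
  have pr : 0 < psi r by apply: pp; rewrite r0 r1.
  have Ra : 0 < r `^ a by rewrite powR_gt0.
  have Rb : 0 < r `^ b by rewrite powR_gt0.
  have Ea : r `^ a = r `^ b * r `^ del.
    rewrite -powRD; last by apply/implyP => _; rewrite gt_eqF.
    by have -> : b + del = a by rewrite /del; ring.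
  have Rd : 0 < r `^ del by rewrite powR_gt0.
  have h1' : psi r <= r `^ a / c.
    have -> : psi r = c * (psi r / r `^ a) * (r `^ a / c) by field; rewrite !gt_eqF.
    rewrite -[X in _ <= X]mul1r; apply: ler_wpM2r h1; by rewrite divr_ge0 ?ltW.
  have h2' : r `^ b <= C * psi r.
    rewrite -[X in X <= _]mul1r.
    apply: le_trans (ler_wpM2r (ltW Rb) h2) _.
    by apply: eq_le_'; field; rewrite gt_eqF.
  have : r `^ b <= C / c * r `^ b * r `^ del.
    apply: le_trans h2' _.
    apply: le_trans (ler_wpM2l (ltW C0) h1') _.
    by apply: eq_le_'; rewrite Ea; field; rewrite gt_eqF.
  rewrite -mulrA [_ * r `^ del]mulrC mulrA -[X in X <= _]mul1r ler_pM2r //.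
set y := c / (2 * C).
have y0 : 0 < y by rewrite /y divr_gt0 // mulr_gt0.
have y1 : y <= 1.
  rewrite /y ler_pdivrMr ?mulr_gt0 // mul1r.
  apply: le_trans c1 _; lra.
set r := y `^ del^-1.
have r0 : 0 < r by rewrite powR_gt0.
have r1 : r <= 1.
  rewrite /r -(powRr0 y); apply: ger_powR; first by rewrite y0 y1.
  by rewrite invr_ge0 ltW.
have := key r r0 r1.
have -> : r `^ del = y.
  rewrite /r -powRrM mulVf ?gt_eqF //.
  by rewrite powRr1 // ltW.
rewrite /y (_ : C / c * (c / (2 * C)) = 2^-1); last by field; rewrite !gt_eqF.
rewrite invf_ge1 //; lra.
Qed.
Lemma right_witness (R : realType) (P : R -> Prop) :
  (\forall r \near 0^'+, P r) -> exists r : R, 0 < r <= 1 /\ P r.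
Proof.
rewrite /prop_near1 /nbhs /= /within /= => /nbhs_ballP [del del0 Hb].
set r := Num.min (del / 2) 1.
have r0 : 0 < r by rewrite /r lt_min ltr01 divr_gt0.
have r1 : r <= 1 by rewrite /r ge_min lexx orbT.
have rd : r < del.
  apply: le_lt_trans (_ : del / 2 < del); first by rewrite /r ge_min lexx.
  by rewrite ltr_pdivrMr // ltr_pMr // ltr1n.
exists r; split; first by rewrite r0 r1.
apply: Hb => //; rewrite /ball /= sub0r normrN gtr0_norm //.
Qed.

Lemma index_ai (R : realType) (psi : R -> R) :
  (forall r : R, 0 < r <= 1 -> 0 < psi r) ->
  psi 1 = 1 ->
  psi r @[r --> 0^'+] --> 0 ->
  I_index psi `<=` [set a : R | 1 < a < 2] ->
  exists a c : R, 1 < a /\ 0 < c /\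
    (forall r s, 0 < r -> r <= s -> s <= 1 -> c * (psi r / r `^ a) <= psi s / s `^ a).
Proof.
move=> pp p1 p0 HI.
case: (pselect (exists a, 1 < a /\ almost_increasing (fun r => psi r / r `^ a)))
  => [[a [a1 [c [/andP[c0 _] Hc]]]] | nS].
  by exists a, c.
exfalso.
have Sle : forall a, almost_increasing (fun r => psi r / r `^ a) -> a <= 1.
  move=> a Ha; rewrite leNgt; apply/negP => a1; apply: nS; by exists a.
have m1 : (m_index psi <= 1%:E)%E.
  apply: ge_ereal_sup => z [a Ha <-]; rewrite lee_fin; exact: Sle.
have mM : (m_index psi <= M_index psi)%E.
  apply: ge_ereal_sup => z [a Ha <-]; apply/ereal_infP => y [b Hb <-].
  rewrite lee_fin; exact: (growth pp p1 Ha Hb).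
case HM: (M_index psi) => [M'| |].
- case: (lerP 1 M') => [M1|M1].
    have : I_index psi 1 by split => //; rewrite HM lee_fin.
    by move/HI => /andP[]; rewrite ltxx.
  have : I_index psi M' by split; [rewrite -HM | rewrite HM].
  move/HI => /andP[h _]; lra.
- have : I_index psi 1 by split => //; rewrite HM leey.
  by move/HI => /andP[]; rewrite ltxx.
- have [z [b Hb <-] blt] := lb_ereal_infNy_adherent 0 HM.
  rewrite lte_fin in blt.
  case: Hb => C [C1 HC].
  have C0 : 0 < C by exact: (lt_le_trans ltr01 C1).
  have lower : forall r, 0 < r -> r <= 1 -> C^-1 <= psi r.
    move=> r r0 r1.
    have h := HC r 1 r0 r1 (lexx _).
    rewrite /= p1 powR1 divr1 in h.
    have pr : 0 < psi r by apply: pp; rewrite r0 r1.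
    have rb : 1 <= r `^ b.
      rewrite -(powRr0 r); apply: ger_powR; [by rewrite r0 r1 | exact: ltW].
    have rb0 : 0 < r `^ b by exact: (lt_le_trans ltr01 rb).
    rewrite -div1r ler_pdivrMr // mulrC.
    apply: le_trans h _.
    by rewrite ler_pM2l // ler_pdivrMr // ler_peMr // ltW.
  have := p0; move/cvgrPdist_lt => /(_ (C^-1)); rewrite invr_gt0 => /(_ C0).
  move/right_witness => [r [/andP[r0 r1] hr]].
  have := lower r r0 r1.
  rewrite sub0r normrN gtr0_norm in hr; last by apply: pp; rewrite r0 r1.
  by rewrite leNgt hr.
Qed.
Theorem lemma2p4 (R : realType) (d : nat) (psi : R -> R) :
  (forall r : R, 0 < r <= 1 -> 0 < psi r) ->
  psi 1 = 1 ->
  psi r @[r --> 0^'+] --> 0 ->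
  I_index psi `<=` [set a : R | 1 < a < 2] ->
  exists C : R, forall f : 'rV[R]_d -> R,
    in_Cpsi psi f ->
    forall i : 'I_d,
      (holder_m1 psi (partial i f) <= C%:E * (sup_norm f + holder2 psi f))%E.
Proof.
move=> pp p1 p0 HI.
have [a [c [a1 [c0 HAI]]]] := index_ai pp p1 p0 HI.
set rho := (2^-1 : R) `^ (a - 1).
have rho0 : 0 <= rho by exact: powR_ge0.
have rho1 : rho < 1 by exact: rho_lt1.
set K := rho ^+ 2 / (c ^+ 2 * (1 - rho)) + 2 / c.
have K0 : 0 < K.
  rewrite /K ltr_wpDl //; last by rewrite divr_gt0.
  by rewrite divr_ge0 ?sqr_ge0 // mulr_ge0 ?sqr_ge0 // subr_ge0 ltW.
exists K => f Hf i.
have Hder : forall x, derivable f x (evec R i).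
  by case: Hf => _ [_ /(_ i) [Hd _]].
have S0 : (0 <= sup_norm f)%E.
  apply: (@le_trans _ _ (`|f 0|%:E)); first by rewrite lee_fin normr_ge0.
  by apply: ereal_sup_ubound; exists 0.
have e1 : enorm (evec R i) = 1 by rewrite -[evec R i]scale1r enorm_evec normr1.
have he : 0 < enorm (evec R i) <= 1 by rewrite e1 ltr01 lexx.
case Hh: (holder2 psi f) => [H | | ].
- have H0 : 0 <= H.
    have := holder2_pt pp Hh 0 he; rewrite e1 => /(le_trans (normr_ge0 _)).
    by rewrite pmulr_lge0 // pp // ltr01 lexx.
  apply: (@le_trans _ _ ((K * H)%:E)).
    apply: ge_ereal_sup => z [x [h [hN ->]]]; rewrite lee_fin.
    have := main_real a1 c0 pp HAI Hder Hh x hN; rewrite -/rho -/K => hb.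
    case/andP: hN => N0 N1.
    have pN : 0 < psi (enorm h) by apply: pp; rewrite N0 N1.
    by rewrite ler_pdivrMr // divr_gt0.
  rewrite EFinM; apply: lee_wpmul2l; first by rewrite lee_fin ltW.
  exact: leeDr.
- rewrite addey; last by apply: contra_eqN S0 => /eqP ->.
  by rewrite muleC gt0_mulye ?lte_fin // leey.
- have := @ereal_sup_ubound R [set z : \bar R | exists x h : 'rV[R]_d,
     0 < enorm h <= 1 /\
     z = (`|f (x + h) - 2 * f x + f (x - h)| / psi (enorm h))%:E] _
     (ex_intro _ 0 (ex_intro _ (evec R i) (conj he erefl))).
  by rewrite -/(holder2 psi f) Hh leNgt ltNyr.
Qed.
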